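(* Let $T=(V,E)$ be a tree with $\mathrm{pthin}(T)=2$, and let $\sigma$ be an ordering of $V$ and $S=\{V^0,V^1\}$ a partition of $V$ that are strongly consistent. Let $v_1,v_2,v_3$ be vertices with $v_1<v_2<v_3$ and $\deg(v_2)\ge 4$. Then there is no vertex $v_0$ that is the nexus between $v_1,v_2,v_3$.
   Context: For a graph $G=(V,E)$, a linear ordering $<$ of $V$ and a partition of $V$ into classes are called strongly consistent if for every triple $r<s<t$ of vertices with $rt\in E$: if $r$ and $s$ belong to the same class then $st\in E$, and if $s$ and $t$ belong to the same class then $rs\in E$. The proper thinness $\mathrm{pthin}(G)$ is the minimum $k$ such that some ordering and some partition into $k$ classes are strongly consistent. For distinct vertices $v_0,v_1,v_2,v_3$ of a tree $T$, let $C_i$ be the unique simple path from $v_0$ to $v_i$ ($i=1,2,3$) and $C_i'$ its vertex set minus $v_0$; $v_0$ is the nexus between $v_1,v_2,v_3$ if $C_1',C_2',C_3'$ are pairwise disjoint. *)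

(* Defs.v *)
From mathcomp Require Import all_boot.
Set Implicit Arguments. Unset Strict Implicit. Unset Printing Implicit Defensive.

Definition simple_graph (T : finType) (e : rel T) : Prop :=
  symmetric e /\ irreflexive e.

Definition connected_graph (T : finType) (e : rel T) : Prop :=
  forall x y : T, connect e x y.

Definition acyclic (T : finType) (e : rel T) : Prop :=
  ~ exists (x : T) (p : seq T),
      [/\ uniq (x :: p), 2 <= size p, path e x p & e (last x p) x].

Definition is_tree (T : finType) (e : rel T) : Prop :=
  [/\ simple_graph e, connected_graph e & acyclic e].

Definition deg (T : finType) (e : rel T) (v : T) : nat := #|[set u | e v u]|.

(* A linear ordering of V is encoded by an injective rank function rk : T -> nat
   (r < s iff rk r < rk s); a partition into classes by a class map cls. *)
Definition strongly_consistent (T : finType) (C : eqType) (e : rel T)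
    (rk : T -> nat) (cls : T -> C) : Prop :=
  forall r s t : T, rk r < rk s -> rk s < rk t -> e r t ->
    (cls r = cls s -> e s t) /\ (cls s = cls t -> e r s).

Definition pthin_le (T : finType) (e : rel T) (k : nat) : Prop :=
  exists (rk : T -> nat) (cls : T -> 'I_k),
    injective rk /\ strongly_consistent e rk cls.

Definition pthin_eq (T : finType) (e : rel T) (k : nat) : Prop :=
  pthin_le e k /\ (forall j, pthin_le e j -> k <= j).

(* v0 is the nexus between v1 v2 v3 (all four distinct): the simple paths
   C_i = v0 :: p_i from v0 to v_i have pairwise disjoint C_i' = p_i. *)
Definition simple_path_from (T : finType) (e : rel T) (u v : T) (p : seq T) : Prop :=
  [/\ path e u p, last u p = v & uniq (u :: p)].

Definition nexus (T : finType) (e : rel T) (v0 v1 v2 v3 : T) : Prop :=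
  uniq [:: v0; v1; v2; v3] /\
  exists p1 p2 p3 : seq T,
    [/\ simple_path_from e v0 v1 p1, simple_path_from e v0 v2 p2,
        simple_path_from e v0 v3 p3 &
     [/\ all (fun x => x \notin p2) p1,
        all (fun x => x \notin p3) p1 & all (fun x => x \notin p3) p2]].

(* Main.v *)
Require Import Defs.
From mathcomp Require Import all_boot zify.
Set Implicit Arguments. Unset Strict Implicit.

Lemma two_cls (a b c : 'I_2) : a != b -> a != c -> b = c.
Proof.
case: a b c => [[|[|?]] Ha] [[|[|?]] Hb] [[|[|?]] Hc] //= _ _; apply: val_inj => //.
Qed.

Ltac kill_neq := repeat match goal with
 | H : is_true (?x != ?y) |- _ => rewrite ?(eq_sym y x) ?(negbTE H); clear H end.

Section Graph.
Variables (T : finType) (e : rel T).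
Hypothesis esymm : symmetric e.
Hypothesis eirr : irreflexive e.
Hypothesis eacyc : acyclic e.

Lemma adj_neq a b : e a b -> a != b.
Proof. by apply: contraTneq => ->; rewrite eirr. Qed.

Lemma cyc3 a b c : e a b -> e b c -> e c a -> False.
Proof.
move=> ab bc ca; apply: eacyc; exists a, [:: b; c].
have := adj_neq ab; have := adj_neq bc; have := adj_neq ca.
rewrite /= !inE => h1 h2 h3.
by kill_neq; rewrite ab bc ca.
Qed.

Lemma cyc4 a b c d : e a b -> e b c -> e c d -> e d a -> a != c -> b != d -> False.
Proof.
move=> ab bc cd da ac bd; apply: eacyc; exists a, [:: b; c; d].
have := adj_neq ab; have := adj_neq bc; have := adj_neq cd; have := adj_neq da.
rewrite /= !inE => h1 h2 h3 h4.
by kill_neq; rewrite ab bc cd da.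
Qed.

Lemma cyc5 a b c d f : e a b -> e b c -> e c d -> e d f -> e f a ->
  a != c -> a != d -> b != d -> b != f -> c != f -> False.
Proof.
move=> ab bc cd df fa ac ad bd bf cf; apply: eacyc; exists a, [:: b; c; d; f].
have := adj_neq ab; have := adj_neq bc; have := adj_neq cd; have := adj_neq df; have := adj_neq fa.
rewrite /= !inE => h1 h2 h3 h4 h5.
by kill_neq; rewrite ab bc cd df fa.
Qed.


Lemma no_cross x p q : path e x p -> path e x q -> uniq (x :: p) -> uniq (x :: q) ->
  all (fun z => z \notin q) p -> p != [::] -> q != [::] ->
  e (last x p) (last x q) -> False.
Proof.
move=> pp pq up uq dis pn; case/lastP: q pq uq dis => [//|q' z] pq uq dis _ el.
apply: eacyc; exists z, (rcons (rev q') x ++ p); split.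
- have -> : z :: rcons (rev q') x ++ p = rev (x :: rcons q' z) ++ p.
    by rewrite rev_cons rev_rcons.
  rewrite cat_uniq rev_uniq uq /=.
  move: up => /= /andP [xp ->]; rewrite andbT.
  apply/hasPn => u up; rewrite mem_rev inE negb_or.
  apply/andP; split; first by apply: contraNneq xp => <-.
  by move/allP: dis => /(_ u up).
- have hp : 0 < size p by rewrite lt0n size_eq0.
  by rewrite size_cat size_rcons addSn ltnS (leq_trans hp) ?leq_addl.
- rewrite cat_path last_rcons pp andbT.
  have := pq; rewrite -(eq_path (e := fun a b => e b a)); last by move=> ??; rewrite esymm.
  by rewrite -rev_path last_rcons belast_rcons rev_cons.
- by rewrite last_cat last_rcons; move: el; rewrite last_rcons.
Qed.


Lemma no_adj x p q u : path e x p -> path e x q -> uniq (x :: p) -> uniq (x :: q) ->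
  all (fun z => z \notin q) p -> q != [::] -> u \in p -> ~~ e u (last x q).
Proof.
move=> pp pq up uq dis qn up'; move: pp up dis; case/path.splitP: up' => p1 p2 pp up dis.
apply/negP => el.
apply: (no_cross (p := rcons p1 u)) pq _ uq _ _ qn _.
- by move: pp; rewrite cat_path => /andP [].
- by move: up; rewrite -cat_cons cat_uniq => /andP [].
- by move: dis; rewrite all_cat => /andP [].
- by case: (p1).
- by rewrite last_rcons.
Qed.

End Graph.

Lemma split_card (T : finType) (A B : {set T}) : 2 < #|A| ->
  1 < #|A :&: B| \/ 1 < #|A :\: B|.
Proof.
rewrite -(cardsID B A) => h; case: (ltnP 1 #|A :&: B|) => h2; [left|right]; lia.
Qed.

Section Order.
Variables (T : finType) (e : rel T).
Hypothesis esymm : symmetric e.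
Hypothesis eirr : irreflexive e.
Hypothesis eacyc : acyclic e.
Variable lt : rel T.
Hypothesis lt_total : forall a b, a != b -> lt a b || lt b a.
Hypothesis lt_asym : forall a b, lt a b -> lt b a -> False.
Hypothesis lt_trans : forall a b c, lt a b -> lt b c -> lt a c.
Variable cls : T -> 'I_2.
Hypothesis sc : forall r s t, lt r s -> lt s t -> e r t ->
  (cls r = cls s -> e s t) /\ (cls s = cls t -> e r s).

Lemma L_between r s t : lt r s -> lt s t -> e r t -> ~~ e r s -> ~~ e s t ->
  cls r = cls t /\ cls s != cls r.
Proof.
move=> rs st rt nrs nst; have [h1 h2] := sc rs st rt.
have a1 : cls s != cls r by apply/eqP => /esym /h1; apply/negP.
have a2 : cls s != cls t by apply/eqP => /h2; apply/negP.
by split => //; apply: two_cls a1 a2.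
Qed.

Lemma crossing (Q : pred T) v x p : (forall u, Q u -> u != v) -> all Q (x :: p) ->
  path e x p -> lt x v -> lt v (last x p) ->
  exists u w, [/\ Q u, Q w, e u w, lt u v & lt v w].
Proof.
move=> Qv; elim: p x => [|z p IH] x /=.
  by move=> _ _ xv vx; case: (lt_asym xv vx).
case/and3P=> Qx Qz Qp /andP [xz pz] xv vl.
case/orP: (lt_total (Qv _ Qz)) => zv.
  by apply: (IH z) => //=; rewrite Qz.
by exists x, z.
Qed.

Lemma pick2 (A : {set T}) : 1 < #|A| -> exists n m, [/\ n \in A, m \in A, n != m & lt n m].
Proof.
case/card_gt1P => x [y [xA yA xy]].
case/orP: (lt_total xy) => h; first by exists x, y.
by exists y, x; rewrite eq_sym.
Qed.


Lemma no3 a b c : e a b -> e b c -> e c a -> False.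
Proof. move=> ab bc ca; exact: (cyc3 eirr eacyc ab bc ca). Qed.
Lemma no4 a b c d : e a b -> e b c -> e c d -> e d a -> a != c -> b != d -> False.
Proof. move=> ab bc cd da; exact: (cyc4 eirr eacyc ab bc cd da). Qed.
Lemma no5 a b c d f : e a b -> e b c -> e c d -> e d f -> e f a ->
  a != c -> a != d -> b != d -> b != f -> c != f -> False.
Proof. move=> ab bc cd df fa; exact: (cyc5 eirr eacyc ab bc cd df fa). Qed.

Lemma neq_of_adj a b c : e a b -> ~~ e a c -> b != c.
Proof. by move=> ab; apply: contraNneq => <-. Qed.

Lemma near_up v n m : e v n -> e v m -> lt v n -> lt n m -> cls n != cls v.
Proof.
move=> vn vm h1 h2; apply/eqP => h; have [H _] := sc h1 h2 vm.
by apply: (no3 vn (H (esym h))); rewrite esymm.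
Qed.

Lemma near_down v n m : e v n -> e v m -> lt n m -> lt m v -> cls m != cls v.
Proof.
move=> vn vm h1 h2; apply/eqP => h.
have nv : e n v by rewrite esymm.
have [_ H] := sc h1 h2 nv.
by apply: (no3 (H h) (_ : e m v) vn); rewrite esymm.
Qed.

Lemma cmp a b : a != b -> lt a b \/ lt b a.
Proof. by move/lt_total/orP. Qed.

Lemma good v x y : 4 <= deg e v -> e x y -> x != v -> y != v -> ~~ e v x -> ~~ e v y ->
  lt x v -> lt v y -> False.
Proof.
move=> dg xy xv yv nvx nvy ltxv ltvy.
have nxv : ~~ e x v by rewrite esymm.
have [cxy cvx] := L_between ltxv ltvy xy nxv nvy.
have clean a : e v a -> ~~ e a x -> ~~ e a y -> cls a = cls v.
  move=> va nax nay.
  have av : a != v by rewrite eq_sym; apply: adj_neq eirr _ _ va.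
  have ay : a != y by apply: (neq_of_adj va).
  have ax : a != x by apply: (neq_of_adj va).
  have nxa : ~~ e x a by rewrite esymm.
  have ya := ay; rewrite eq_sym in ya.
  have nya : ~~ e y a by rewrite esymm.
  have cxv : cls x != cls v by rewrite eq_sym.
  case: (cmp av) => [lav|lva].
    case: (cmp ax) => [lax|lxa].
      have eav : e a v by rewrite esymm.
      by have [h _] := L_between lax ltxv eav nax nxv.
    have [_ h] := L_between lxa (lt_trans lav ltvy) xy nxa nay.
    by apply/esym; apply: (two_cls cxv); rewrite eq_sym.
  case: (cmp ay) => [lay|lya].
    have [_ h] := L_between (lt_trans ltxv lva) lay xy nxa nay.
    by apply/esym; apply: (two_cls cxv); rewrite eq_sym.
  by have [h _] := L_between ltvy lya va nvy nya.
pose N := [set u | e v u].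
pose U := [set u in N | e u x || e u y].
have U1 : #|U| <= 1.
  apply/card_le1_eqP => u u'; rewrite !inE => /andP [vu hu] /andP [vu' hu'].
  case: (eqVneq u u') => // uu'; exfalso.
  have vx : v != x by rewrite eq_sym.
  have vy : v != y by rewrite eq_sym.
  have uy : u != y by apply: (neq_of_adj vu).
  have ux : u != x by apply: (neq_of_adj vu).
  have u'y : u' != y by apply: (neq_of_adj vu').
  have u'x : u' != x by apply: (neq_of_adj vu').
  have xy' : x != y by apply: adj_neq eirr _ _ xy.
  have uv : e u' v by rewrite esymm.
  case/orP: hu => hu; case/orP: hu' => hu'.
  - by apply: (no4 vu hu (_ : e x u') uv vx uu'); rewrite esymm.
  - apply: (no5 vu hu xy (_ : e y u') uv vx vy uy uu'); first by rewrite esymm.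
    by rewrite eq_sym.
  - apply: (no5 vu hu (_ : e y x) (_ : e x u') uv vy vx ux uu'); try by rewrite esymm.
    by rewrite eq_sym.
  - by apply: (no4 vu hu (_ : e y u') uv vy uu'); rewrite esymm.
have C3 : 2 < #|N :\: U|.
  rewrite cardsDS; last by apply/subsetP => u; rewrite inE => /andP [].
  move: dg; rewrite /deg -/N; lia.
have inC u : u \in N :\: U -> [/\ e v u, ~~ e u x & ~~ e u y].
  rewrite !inE => /andP [h vu]; move: h; rewrite vu /= negb_or => /andP [h1 h2].
  by split.
case: (split_card [set u | lt v u] C3) => /pick2 [] // n [m [hn hm nm ltnm]].
- case/setIP: hn => /inC [van nax nay]; rewrite inE => vn.
  case/setIP: hm => /inC [vam _ _] _.
  by move/eqP: (near_up van vam vn ltnm); apply; apply: clean.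
- case/setDP: hn => /inC [van _ _] _.
  case/setDP: hm => /inC [vam max may]; rewrite inE => vm.
  have mv : m != v by rewrite eq_sym; apply: adj_neq eirr _ _ vam.
  have lmv : lt m v by case: (cmp mv) => // h; rewrite h in vm.
  by move/eqP: (near_down van vam ltnm lmv); apply; apply: clean.
Qed.

Lemma bad v0 v2 x1 y : 4 <= deg e v2 -> e v0 v2 -> e v0 x1 -> e v0 y ->
  ~~ e v2 x1 -> ~~ e v2 y -> lt x1 v2 -> lt v2 y -> lt v0 v2 -> False.
Proof.
move=> dg e02 e0x e0y n2x n2y lx2 l2y l02.
have c0 : cls v0 != cls v2.
  by apply/eqP => h; have [H _] := sc l02 l2y e0y; move: n2y; rewrite (H h).
have e20 : e v2 v0 by rewrite esymm.
have facts n : e v2 n -> n != v0 ->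
    [/\ ~~ e n v0, n != y, n != x1, ~~ e n y & ~~ e n x1].
  move=> e2n nv0.
  have n2 : e n v2 by rewrite esymm.
  have v2y : v2 != y by apply/eqP => h; rewrite -h in l2y; apply: (lt_asym l2y l2y).
  have v2x : v2 != x1 by apply/eqP => h; rewrite -h in lx2; apply: (lt_asym lx2 lx2).
  split.
  - by apply/negP => h; apply: (no3 e2n h e02).
  - exact: (neq_of_adj e2n).
  - exact: (neq_of_adj e2n).
  - by apply/negP => h; apply: (no4 n2 e20 e0y (_ : e y n) nv0 v2y); rewrite esymm.
  - by apply/negP => h; apply: (no4 n2 e20 e0x (_ : e x1 n) nv0 v2x); rewrite esymm.
have up n : e v2 n -> n != v0 -> lt v2 n -> cls n = cls v2.
  move=> e2n nv0 l2n; have [nn0 ny _ nny _] := facts n e2n nv0.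
  have n0n : ~~ e v0 n by rewrite esymm.
  have nyn : ~~ e y n by rewrite esymm.
  case: (cmp ny) => [lny|lyn].
    have [_ h] := L_between (lt_trans l02 l2n) lny e0y n0n nny.
    by apply: (two_cls (a := cls v0)) => //; rewrite eq_sym.
  by have [h _] := L_between l2y lyn e2n n2y nyn.
pose N' := [set u | e v2 u] :\ v0.
have C3 : 2 < #|N'|.
  move: dg; rewrite /deg (cardsD1 v0) -/N'; case: (v0 \in _); lia.
have inN u : u \in N' -> e v2 u /\ u != v0.
  by rewrite !inE => /andP [].
case: (split_card [set u | lt v2 u] C3) => /pick2 [] // n [m [hn hm nm ltnm]].
- case/setIP: hn => /inN [e2n n0]; rewrite inE => l2n.
  case/setIP: hm => /inN [e2m m0] _.
  by move/eqP: (near_up e2n e2m l2n ltnm); apply; apply: up.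
- case/setDP: hn => /inN [e2n n0] _.
  case/setDP: hm => /inN [e2m m0]; rewrite inE => nl.
  have m2 : m != v2 by rewrite eq_sym; apply: adj_neq eirr _ _ e2m.
  have lm2 : lt m v2 by case: (cmp m2) => // h; rewrite h in nl.
  have cm := near_down e2n e2m ltnm lm2.
  have [nm0 my mx nmy nmx] := facts m e2m m0.
  have m0n : ~~ e v0 m by rewrite esymm.
  have em2 : e m v2 by rewrite esymm.
  have x2 : ~~ e x1 v2 by rewrite esymm.
  case: (cmp m0) => [lm0|l0m]; last first.
    have [_ h] := L_between l0m (lt_trans lm2 l2y) e0y m0n nmy.
    by move/eqP: cm; apply; apply: (two_cls (a := cls v0)) => //; rewrite eq_sym.
  have x0 : x1 != v0 by rewrite eq_sym; apply: adj_neq eirr _ _ e0x.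
  case: (cmp x0) => [lx0|l0x].
    have xm : x1 != m by rewrite eq_sym.
    have ex0 : e x1 v0 by rewrite esymm.
    have nxm : ~~ e x1 m by rewrite esymm.
    case: (cmp xm) => [lxm|lmx].
      have [h1 h2] := L_between lxm lm0 ex0 nxm nm0.
      have cm0 : cls m != cls v0 by rewrite -h1.
      have : cls m = cls v0.
        by apply: (two_cls (a := cls v2)); rewrite eq_sym.
      by move/eqP: cm0.
    by have [h _] := L_between lmx lx2 em2 nmx x2; move/eqP: cm; rewrite h.
  by have [h _] := L_between (lt_trans lm0 l0x) lx2 em2 nmx x2; move/eqP: cm; rewrite h.
Qed.

End Order.

Lemma all_notin_sym (T : eqType) (p q : seq T) :
  all (fun z => z \notin q) p -> all (fun z => z \notin p) q.
Proof.
move=> d; apply/allP => z zq; apply/negP => zp.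
by move/allP: d => /(_ z zp); rewrite zq.
Qed.

Theorem corollaryA8 (T : finType) (e : rel T) (Htree : is_tree e)
    (Hpthin : pthin_eq e 2)
    (rk : T -> nat) (cls : T -> 'I_2) (Hrk : injective rk)
    (Hsc : strongly_consistent e rk cls)
    (v1 v2 v3 : T) (H12 : rk v1 < rk v2) (H23 : rk v2 < rk v3)
    (Hdeg : 4 <= deg e v2) :
  ~ exists v0 : T, nexus e v0 v1 v2 v3.
Proof.
case: Htree => [[esymm eirr] _ eacyc].
pose lt := fun a b => rk a < rk b.
pose lt' := fun a b => rk b < rk a.
have ltot : forall a b, a != b -> lt a b || lt b a.
  move=> a b ab; rewrite /lt; case: ltngtP => // h.
  by rewrite (Hrk _ _ h) eqxx in ab.
have ltot' : forall a b, a != b -> lt' a b || lt' b a.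
  by move=> a b ab; rewrite /lt' orbC; apply: ltot.
have lasy : forall a b, lt a b -> lt b a -> False.
  by move=> a b; rewrite /lt => h1 h2; move: (ltn_trans h1 h2); rewrite ltnn.
have lasy' : forall a b, lt' a b -> lt' b a -> False.
  by move=> a b h1 h2; apply: (lasy _ _ h2 h1).
have ltr : forall a b c, lt a b -> lt b c -> lt a c.
  by move=> a b c; apply: ltn_trans.
have ltr' : forall a b c, lt' a b -> lt' b c -> lt' a c.
  by move=> a b c h1 h2; apply: (ltn_trans h2 h1).
have sc' : forall r s t, lt' r s -> lt' s t -> e r t ->
    (cls r = cls s -> e s t) /\ (cls s = cls t -> e r s).
  move=> r s t h1 h2 rt; rewrite esymm in rt.
  have [a b] := Hsc t s r h2 h1 rt.
  split => h; [rewrite esymm; apply: b | rewrite esymm; apply: a]; done.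
have goodL := good esymm eirr eacyc ltot ltr Hsc.
have goodR := good esymm eirr eacyc ltot' ltr' sc'.
have badL := bad esymm eirr eacyc ltot lasy ltr Hsc.
have badR := bad esymm eirr eacyc ltot' lasy' ltr' sc'.
case=> v0 [Hu [p1 [p2 [p3 [[pp1 l1 u1] [pp2 l2 u2] [pp3 l3 u3] [d12 d13 d23]]]]]].
move: Hu; rewrite /= !inE !negb_or => /andP [/and3P [n01 n02 n03] _].
have p2n : p2 != [::] by apply: contraNneq n02 => h; rewrite -l2 h.
have v2p2 : v2 \in p2.
  have := mem_last v0 p2; rewrite l2 inE => /orP [/eqP h|//].
  by move: n02; rewrite h eqxx.
pose Q := fun u => (u != v2) && ~~ e v2 u.
have Qv u : Q u -> u != v2 by case/andP.
have d32 := all_notin_sym d23.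
have Q1 : all Q p1.
  apply/allP => u up; apply/andP; split.
    by apply: contraTneq up => ->; move/allP: (all_notin_sym d12) => /(_ v2 v2p2).
  by rewrite esymm -l2; apply: (no_adj esymm eacyc pp1 pp2 u1 u2 d12 p2n up).
have Q3 : all Q p3.
  apply/allP => u up; apply/andP; split.
    by apply: contraTneq up => ->; move/allP: d23 => /(_ v2 v2p2).
  by rewrite esymm -l2; apply: (no_adj esymm eacyc pp3 pp2 u3 u2 d32 p2n up).
have p1n : p1 != [::] by apply: contraNneq n01 => h; rewrite -l1 h.
have p3n : p3 != [::] by apply: contraNneq n03 => h; rewrite -l3 h.
case: (boolP (e v2 v0)) => e20; last first.
  have Q0 : Q v0 by rewrite /Q n02.
  case/orP: (ltot _ _ n02) => h.
    have A0 : all Q (v0 :: p3) by rewrite /= Q0 Q3.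
    have B0 : lt v2 (last v0 p3) by rewrite l3.
    have [u [w [Qu Qw uw lu lw]]] := crossing (e:=e) ltot lasy (Q:=Q) (v:=v2) Qv A0 pp3 h B0.
    by case/andP: Qu => ? ?; case/andP: Qw => ? ?; apply: (goodL v2 u w).
  have A0 : all Q (v0 :: p1) by rewrite /= Q0 Q1.
  have B0 : lt' v2 (last v0 p1) by rewrite l1.
  have [u [w [Qu Qw uw lu lw]]] := crossing (e:=e) ltot' lasy' (Q:=Q) (v:=v2) Qv A0 pp1 h B0.
  case/andP: Qu => ? ?; case/andP: Qw => ? ?; apply: (goodL v2 w u) => //.
  by rewrite esymm.
case: p1 p1n pp1 u1 l1 Q1 d12 d13 => [//|x1 p1'] _ /= /andP [e0x pp1'] u1 l1 /andP [Qx Q1'] d12 d13.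
case: p3 p3n pp3 u3 l3 Q3 d23 d32 d13 => [//|y p3'] _ /= /andP [e0y pp3'] u3 l3 /andP [Qy Q3'] d23 d32 d13.
case/orP: (ltot _ _ (Qv _ Qx)) => hx; last first.
  have A0 : all Q (x1 :: p1') by rewrite /= Qx Q1'.
  have B0 : lt' v2 (last x1 p1') by rewrite l1.
  have [u [w [Qu Qw uw lu lw]]] := crossing (e:=e) ltot' lasy' (Q:=Q) (v:=v2) Qv A0 pp1' hx B0.
  case/andP: Qu => ? ?; case/andP: Qw => ? ?; apply: (goodL v2 w u) => //.
  by rewrite esymm.
case/orP: (ltot _ _ (Qv _ Qy)) => hy.
  have A0 : all Q (y :: p3') by rewrite /= Qy Q3'.
  have B0 : lt v2 (last y p3') by rewrite l3.
  have [u [w [Qu Qw uw lu lw]]] := crossing (e:=e) ltot lasy (Q:=Q) (v:=v2) Qv A0 pp3' hy B0.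
  by case/andP: Qu => ? ?; case/andP: Qw => ? ?; apply: (goodL v2 u w).
have e02 : e v0 v2 by rewrite esymm.
case/andP: Qx => _ nx; case/andP: Qy => _ ny.
case/orP: (ltot _ _ n02) => h.
  exact: (badL v0 v2 x1 y Hdeg e02 e0x e0y nx ny hx hy h).
exact: (badR v0 v2 y x1 Hdeg e02 e0y e0x ny nx hy hx h).
Qed.
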